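(* Let $\Lambda$ be the double of a cellular decomposition of a compact oriented surface without boundary, with a discrete conformal structure $\rho$. For each pair of vertices $x,x'\in\Lambda_0$ joined by a simple path $\lambda$ in $\Lambda$ from $x$ to $x'$, there exists a unique pair of meromorphic $1$-forms $\alpha_{x,x'},\beta_{x,x'}$ on $\Lambda$ whose only poles are at $x$ and $x'$, with residues $+1$ at $x$ and $-1$ at $x'$, such that $\alpha_{x,x'}$ has purely imaginary holonomies and $\beta_{x,x'}$ has real holonomies along every loop in $\Lambda$ none of whose edges is dual to an edge of $\lambda$.
   Context: $\Lambda=\Gamma\sqcup\Gamma^*$ with $\Gamma$ a cellular decomposition and $\Gamma^*$ its Poincaré dual (dual edge $e^*$ for each edge $e$, dual face $v^*$ for each vertex $v$, $e^{**}=-e$); $\rho:\Lambda_1\to(0,\infty)$ with $\rho(e)\rho(e^* )=1$. Hodge star on 1-forms: $\int_e*\alpha=-\rho(e^* )\int_{e^*}\alpha$. A 1-form $\alpha$ is of type $(1,0)$ if $*\alpha=-i\alpha$. It is meromorphic with poles at a set of vertices if it is of type $(1,0)$, closed on every face $v^*$ of $\Lambda$ for $v$ not a pole, and not closed on $v^*$ for $v$ a pole; its residue at $v$ is $\mathrm{Res}_v(\alpha)=\frac{1}{2i\pi}\oint_{\partial v^*}\alpha$. The holonomy along a loop (closed edge-path) $\gamma$ is $\int_\gamma\alpha$. *)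

(* Defs.v *)
From HB Require Import structures.
From mathcomp Require Import all_boot all_order all_fingroup all_algebra.
From mathcomp Require Import complex.
From mathcomp Require Import reals trigo.

Set Implicit Arguments.
Unset Strict Implicit.
Unset Printing Implicit Defensive.

Import Order.TTheory GRing.Theory Num.Theory.
Local Open Scope ring_scope.

(* A cellular decomposition Gamma of a compact oriented surface without       *)
(* boundary is encoded as a combinatorial map (rotation system):              *)
(*   - D : finite set of darts (oriented edges),                             *)
(*   - s : D -> D, fixed-point-free involution (edge reversal, e |-> -e),     *)
(*   - phi : {perm D}, counterclockwise rotation of the darts around their    *)
(*     origin vertex.                                                          *)
(* Vertices of Gamma = phi-orbits (a dart d starts at the vertex of its        *)
(* orbit).  The face to the LEFT of a dart d is the orbit of d under           *)
(* psi := d |-> phi^-1 (s d)  (boundary of a face traversed counterclockwise). *)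
(* Every such data (with a transitive action) is a cellular decomposition of   *)
(* a closed connected oriented surface, and conversely.                        *)

Section Map.
Variables (D : finType) (s : D -> D) (phi : {perm D}).

Definition face_perm (d : D) : D := (phi^-1)%g (s d).

Definition is_cellular_map : Prop :=
  (forall d, s (s d) = d) /\ (forall d, s d != d) /\
  (forall d d', connect (fun a b => (b == phi a) || (b == s a)) d d').

(* Darts of the double Lambda = Gamma ⊔ Gamma^* :                              *)
(*   inl d = the dart d of Gamma (from its origin vertex to that of s d),       *)
(*   inr d = the dual dart d^* of Gamma^*, which crosses d from the face on     *)
(*           the right of d (face of s d) to the face on the left of d.         *)
Definition ldart := (D + D)%type.

Definition lrev (x : ldart) : ldart :=
  match x with inl d => inl (s d) | inr d => inr (s d) end.

(* duality  e |-> e^*  on Lambda ; one checks e^** = -e *)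
Definition lstar (x : ldart) : ldart :=
  match x with inl d => inr d | inr d => inl (s d) end.

(* two darts of Lambda have the same origin (a vertex of Lambda_0 =            *)
(* Gamma_0 ⊔ Gamma^*_0, the latter being the faces of Gamma)                    *)
Definition same_org (x y : ldart) : bool :=
  match x, y with
  | inl d, inl d' => fconnect phi d d'
  | inr d, inr d' => fconnect face_perm (s d) (s d')
  | _, _ => false
  end.

Definition conformal_structure (R : realType) (rho : ldart -> R) : Prop :=
  (forall x, rho (lrev x) = rho x) /\ (forall x, 0 < rho x) /\
  (forall x, rho x * rho (lstar x) = 1).

Section Forms.
Variables (R : realType).
Local Notation C := (complex R).

Definition realC (r : R) : C := Complex r 0.
Definition iC : C := Complex 0 1.

Definition one_form (a : ldart -> C) : Prop := forall x, a (lrev x) = - a x.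

Definition hodge (rho : ldart -> R) (a : ldart -> C) : ldart -> C :=
  fun x => - realC (rho (lstar x)) * a (lstar x).

Definition type10 (rho : ldart -> R) (a : ldart -> C) : Prop :=
  one_form a /\ forall x, hodge rho a x = - iC * a x.

(* contour integral of a along the boundary of the face v^* dual to the vertex *)
(* v = origin of x : for each dart y issuing from v, y^* runs counterclockwise  *)
(* along the boundary of v^*.                                                   *)
Definition contour (a : ldart -> C) (x : ldart) : C :=
  \sum_(y : ldart | same_org x y) a (lstar y).

Definition closed_at (a : ldart -> C) (x : ldart) : Prop := contour a x = 0.

Definition residue (a : ldart -> C) (x : ldart) : C :=
  (realC 2 * iC * realC pi)^-1 * contour a x.

(* a is meromorphic with poles exactly at the vertices (origins of darts)      *)
(* satisfying P (P is assumed to be a union of vertices)                         *)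
Definition meromorphic (rho : ldart -> R) (P : ldart -> bool) (a : ldart -> C)
  : Prop :=
  type10 rho a /\ (forall x, ~~ P x -> closed_at a x) /\
  (forall x, P x -> ~ closed_at a x).

Definition holonomy (a : ldart -> C) (g : seq ldart) : C := \sum_(y <- g) a y.

End Forms.

(* edge paths in Lambda : walk x p y  <=>  p = [e1; ...; en] is an edge path  *)
(* from the vertex of x to the vertex of y                                     *)
Fixpoint walk (x : ldart) (p : seq ldart) (y : ldart) : bool :=
  match p with
  | [::] => same_org x y
  | e :: p' => same_org x e && walk (lrev e) p' y
  end.

Definition simple_path (x : ldart) (p : seq ldart) (y : ldart) : bool :=
  walk x p y && pairwise (fun u v => ~~ same_org u v) (x :: map lrev p).

Definition loop (g : seq ldart) : Prop := exists z, walk z g z.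

Definition dual_edge (y e : ldart) : bool :=
  (y == lstar e) || (y == lrev (lstar e)).

Definition avoids_dual (lam g : seq ldart) : bool :=
  all (fun y => all (fun e => ~~ dual_edge y e) lam) g.

End Map.

(* Main.v *)
Require Import Defs.
From HB Require Import structures.
From mathcomp Require Import all_boot all_order all_fingroup all_algebra.
From mathcomp Require Import complex.
From mathcomp Require Import reals trigo.

Import Order.TTheory GRing.Theory Num.Theory.
Local Open Scope ring_scope.
From mathcomp Require Import boolp.
From mathcomp Require Import ring.
Set Implicit Arguments.
Unset Strict Implicit.
Unset Printing Implicit Defensive.


Section Comb.
Variables (D : finType) (s : D -> D) (phi : {perm D}).
Hypothesis Hss : forall d, s (s d) = d.

Local Notation X := (ldart D).
Local Notation so := (same_org s phi).
Local Notation lrev := (lrev s).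
Local Notation lstar := (lstar s).

Definition isl (y : X) : bool := if y is inl _ then true else false.

Lemma s_inj : injective s.
Proof. by move=> a b e; rewrite -(Hss a) e Hss. Qed.

Lemma face_inj : injective (face_perm s phi).
Proof. by move=> a b; rewrite /face_perm => /perm_inj /s_inj. Qed.

Lemma lrevK : involutive lrev.
Proof. by case=> d /=; rewrite Hss. Qed.

Lemma lrev_inj : injective lrev.
Proof. exact: inv_inj lrevK. Qed.

Lemma lstar2 y : lstar (lstar y) = lrev y.
Proof. by case: y. Qed.

Lemma lstar_rev y : lstar (lrev y) = lrev (lstar y).
Proof. by case: y => d //=; rewrite Hss. Qed.

Lemma lstar_inj : injective lstar.
Proof. by move=> a b e; apply: lrev_inj; rewrite -!lstar2 e. Qed.

Definition lstarI y := lstar (lrev y).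

Lemma lstarK y : lstar (lstarI y) = y.
Proof. by rewrite /lstarI lstar2 lrevK. Qed.

Lemma lstarIK y : lstarI (lstar y) = y.
Proof. by rewrite /lstarI lstar_rev lstar2 lrevK. Qed.

Lemma isl_rev y : isl (lrev y) = isl y.
Proof. by case: y. Qed.

Lemma isl_star y : isl (lstar y) = ~~ isl y.
Proof. by case: y. Qed.

Lemma isl_starI y : isl (lstarI y) = ~~ isl y.
Proof. by rewrite /lstarI isl_star isl_rev. Qed.

Lemma so_refl y : so y y.
Proof. by case: y => d /=; apply: connect0. Qed.

Lemma so_sym y z : so y z = so z y.
Proof.
case: y; case: z => d e //=; apply: fconnect_sym;
  first [exact: perm_inj | exact: face_inj].
Qed.

Lemma so_trans y z w : so y z -> so z w -> so y w.
Proof. by case: y; case: z; case: w => //= a b c; apply: connect_trans. Qed.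

Lemma so_isl y z : so y z -> isl y = isl z.
Proof. by case: y; case: z. Qed.

Definition nxt (y : X) : X :=
  match y with inl d => inl (phi d) | inr d => inr (s ((phi^-1)%g d)) end.

Lemma nxt_inj : injective nxt.
Proof.
move=> [a|a] [b|b] //= [] e; congr (_ _).
- exact: perm_inj e.
- by move: e => /s_inj /perm_inj.
Qed.

Lemma so_nxt y : so y (nxt y).
Proof.
case: y => d /=; first exact: fconnect1.
rewrite Hss; have := fconnect1 (face_perm s phi) (s d).
by rewrite {2}/face_perm Hss.
Qed.

Lemma so_star_nxt y : so (lrev (lstar y)) (lstar (nxt y)).
Proof.
case: y => d /=.
- rewrite Hss (fconnect_sym face_inj).
  have := fconnect1 (face_perm s phi) (s (phi d)).
  by rewrite {2}/face_perm Hss permK.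
- rewrite !Hss (fconnect_sym (@perm_inj _ phi)).
  have := fconnect1 phi ((phi^-1)%g d). by rewrite permKV.
Qed.

Definition cconst {T} (F : X -> T) := forall a b, so a b -> F a = F b.

Lemma sum_class_nxt (R : nmodType) v (F : X -> R) :
  \sum_(y | so v y) F (nxt y) = \sum_(y | so v y) F y.
Proof.
rewrite [RHS](reindex_inj nxt_inj) /=; apply: eq_bigl => y.
apply/idP/idP => h; first exact: so_trans h (so_nxt y).
by apply: so_trans h _; rewrite so_sym so_nxt.
Qed.

Lemma telescope_vertex (R : zmodType) (F : X -> R) v : cconst F ->
  \sum_(y | so v y) (F (lrev (lstar y)) - F (lstar y)) = 0.
Proof.
move=> cF; rewrite sumrB.
have -> : \sum_(y | so v y) F (lrev (lstar y)) = \sum_(y | so v y) F (lstar (nxt y)).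
  by apply: eq_bigr => y _; apply: cF; apply: so_star_nxt.
by rewrite (sum_class_nxt v (fun y => F (lstar y))) subrr.
Qed.

Lemma so_card (y z : X) : so y z ->
  #|[pred w | so y w]| = #|[pred w | so z w]|.
Proof.
move=> h; apply: eq_card => w /=; apply/idP/idP => h2.
- by apply: so_trans h2; rewrite so_sym.
- exact: so_trans h h2.
Qed.

Lemma class_sum_zero (R : numFieldType) (F G : X -> R) : cconst G ->
  (forall v, \sum_(y | so v y) F y = 0) -> \sum_y F y * G y = 0.
Proof.
move=> cG hF.
pose N (z : X) : R := (#|[pred w | so z w]|)%:R.
have N0 z : N z != 0.
  rewrite /N pnatr_eq0 -lt0n; apply/card_gt0P; exists z; exact: so_refl.
have NE z : \sum_(w | so z w) (1 : R) = N z.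
  by rewrite sumr_const /N; congr (_%:R); apply: eq_card.
transitivity (\sum_y \sum_(z | so y z) (F y * G y / N y)).
  apply: eq_bigr => y _; rewrite sumr_const -mulr_natr.
  have -> : (#|[pred z | so y z]|)%:R = N y :> R by rewrite /N; congr (_%:R); apply: eq_card.
  by rewrite divfK.
under eq_bigr => y _ do rewrite big_mkcond.
rewrite exchange_big /=; apply: big1 => z _.
transitivity (\sum_(y | so z y) F y * (G z / N z)).
  rewrite [RHS]big_mkcond; apply: eq_bigr => y _; rewrite so_sym.
  case: ifP => // h; rewrite /N -(so_card h) -(cG _ _ h) mulrA //.
by rewrite -big_distrl /= hF mul0r.
Qed.

Lemma energy (R : numFieldType) (F G : X -> R) :
  (forall y, F (lrev y) = - F y) -> cconst G ->
  (forall v, \sum_(y | so v y) F y = 0) ->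
  \sum_y F y * (G (lrev y) - G y) = 0.
Proof.
move=> aF cG hF.
have h := class_sum_zero cG hF.
rewrite (eq_bigr (fun y => F y * G (lrev y) - F y * G y)); last by move=> y _; rewrite mulrBr.
rewrite sumrB h subr0 (reindex_inj lrev_inj) /=.
rewrite (eq_bigr (fun y => - (F y * G y))); last by move=> y _; rewrite lrevK aF mulNr.
by rewrite sumrN h oppr0.
Qed.

Local Notation walk := (walk s phi).

Lemma walk_org_l x x' p y : so x x' -> walk x' p y -> walk x p y.
Proof.
case: p => [|e p] /= h.
- exact: so_trans.
- by case/andP=> h1 h2; rewrite (so_trans h h1).
Qed.

Lemma walk_org_r x p y y' : walk x p y -> so y y' -> walk x p y'.
Proof.
elim: p x => [|e p IH] x /=; first exact: so_trans.
by case/andP=> h1 h2 h; rewrite h1 (IH _ h2 h).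
Qed.

Lemma walk_cat x p y q z : walk x p y -> walk y q z -> walk x (p ++ q) z.
Proof.
elim: p x => [|e p IH] x /=; first exact: walk_org_l.
by case/andP=> h1 h2 h; rewrite h1 (IH _ h2 h).
Qed.

Lemma walk_rcons x p y e : walk x p y -> so y e -> walk x (rcons p e) (lrev e).
Proof.
move=> h1 h2; rewrite -cats1; apply: walk_cat h1 _.
by rewrite /= h2 so_refl.
Qed.

Lemma walk_rev x p y : walk x p y -> walk y (rev (map lrev p)) x.
Proof.
elim: p x => [|e p IH] x /=; first by rewrite so_sym.
case/andP=> h1 h2; rewrite rev_cons -cats1.
apply: walk_cat (IH _ h2) _.
by rewrite /= so_refl lrevK so_sym.
Qed.

Lemma walk_type x p y : walk x p y -> isl y = isl x /\ all (fun e => isl e == isl x) p.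
Proof.
elim: p x => [|e p IH] x /=; first by move/so_isl.
case/andP=> h1 h2; have [hy ha] := IH _ h2.
have E : isl (lrev e) = isl x by rewrite isl_rev (so_isl h1).
rewrite E in hy ha; by rewrite hy ha -(so_isl h1) eqxx.
Qed.

Lemma telescope_walk (R : zmodType) (G : X -> R) x p y : cconst G -> walk x p y ->
  \sum_(e <- p) (G (lrev e) - G e) = G y - G x.
Proof.
move=> cG; elim: p x => [|e p IH] x /=.
  by move=> h; rewrite big_nil (cG _ _ h) subrr.
case/andP=> h1 h2; rewrite big_cons (IH _ h2) (cG _ _ h1).
by rewrite addrC addrA subrK.
Qed.

Lemma walk_mem z p w : walk z p w -> forall y, y \in p -> exists2 u, u \in z :: map lrev p & so u y.
Proof.
elim: p z => [|e p IH] z //= /andP[h1 h2] y; rewrite inE => /orP[/eqP->|hy].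
  by exists z; rewrite ?inE ?eqxx.
have [u hu hu2] := IH _ h2 y hy; exists u => //.
by rewrite inE hu orbT.
Qed.

Lemma path_flow_zero (R : zmodType) (h : X -> R) x lam x' :
  simple_path s phi x lam x' ->
  (forall y, h (lrev y) = - h y) ->
  (forall y, y \notin lam -> lrev y \notin lam -> h y = 0) ->
  (forall v, \sum_(y | so v y) h y = 0) ->
  forall y, h y = 0.
Proof.
move=> hsp ah.
have hrev y : h (lrev y) = 0 -> h y = 0.
  by move=> e; rewrite -(lrevK y) ah e oppr0.
suff main : forall y, y \in lam -> (forall y, y \notin lam -> lrev y \notin lam -> h y = 0) ->
  (forall v, \sum_(y | so v y) h y = 0) -> h y = 0.
  move=> hs hv y; case: (boolP (y \in lam)) => [hy|hy]; first exact: main.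
  case: (boolP (lrev y \in lam)) => [hy'|hy']; last exact: hs.
  by apply: hrev; apply: main.
elim: lam x hsp => [|e p IH] x; first by [].
rewrite /simple_path => /andP[hw].
rewrite pairwise_cons => /andP[hx hpw] y0 hy0 hs hv.
move: hw => /= /andP[h1 h2].
rewrite map_cons in hx hpw.
have hxn u : u \in lrev e :: map lrev p -> ~~ so x u.
  by move=> hu; move/allP: hx; apply.
have he : h e = 0.
  rewrite -(hv x) (bigD1 e h1) /= big1 ?addr0 // => y /andP[hxy hye].
  apply: hs; apply/negP; rewrite inE => /orP[/eqP ye|yp].
  - by rewrite ye eqxx in hye.
  - have [u hu hu2] := walk_mem h2 yp.
    have := hxn u hu.
    by rewrite (so_trans hxy _) // so_sym.
  - have hn := hxn (lrev e) (mem_head _ _).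
    by rewrite -ye lrevK hxy in hn.
  - have : ~~ so x y.
      apply: hxn; rewrite inE; apply/orP; right.
      by apply/mapP; exists (lrev y); rewrite ?lrevK.
    by rewrite hxy.
move: hy0; rewrite inE => /orP[/eqP->//|hy0].
apply: (IH (lrev e)) => //; first by rewrite /simple_path h2.
move=> y hy hy'; case: (boolP (y == e)) => [/eqP->//|ye].
case: (boolP (lrev y == e)) => [/eqP ye'|ye'].
  by apply: hrev; rewrite ye'.
apply: hs; apply/negP; rewrite inE => /orP[] hh.
- by rewrite hh in ye.
- by rewrite hh in hy.
- by rewrite hh in ye'.
- by rewrite hh in hy'.
Qed.

Lemma conn_pred
  (Hconn : forall d d', connect (fun a b => (b == phi a) || (b == s a)) d d')
  (S : X -> Prop) b :
  (forall z z', so z z' -> S z -> S z') ->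
  (forall z, isl z = isl b -> S z -> S (lrev z)) -> S b ->
  forall z, isl z = isl b -> S z.
Proof.
move=> hso hrv hb.
suff gen : forall (c : D -> X), (forall d, S (c d) -> S (c (phi d))) ->
   (forall d, S (c d) -> S (c (s d))) -> forall d0, S (c d0) -> forall d, S (c d).
  case: b hso hrv hb => d0 hso hrv hb [d|d] //= _.
  - apply: (gen inl) hb _ => // a ha.
      by apply: hso ha; apply: fconnect1.
    exact: (hrv (inl a)).
  - apply: (gen inr) hb _ => // a ha.
      have h2 : S (inr (s a)) by exact: (hrv (inr a)).
      apply: hso h2; rewrite /= Hss (fconnect_sym face_inj).
      have := fconnect1 (face_perm s phi) (s (phi a)).
      by rewrite {2}/face_perm Hss permK.
    exact: (hrv (inr a)).
move=> c hphi hs d0 h0 d.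
move: (Hconn d0 d) => /connectP [pth Hp ->].
elim: pth d0 h0 Hp => [|a pth IH] d0 h0 //= /andP[/orP[]/eqP -> hp].
- exact: IH (hphi _ h0) hp.
- exact: IH (hs _ h0) hp.
Qed.

Section Potential.
Variables (A : pred X) (b : X) (R : zmodType) (om : X -> R).
Hypothesis hA : forall z, A (lrev z) = A z.
Hypothesis hom : forall z, om (lrev z) = - om z.
Hypothesis hloop : forall g z, walk z g z -> all A g -> \sum_(e <- g) om e = 0.

Definition reach z := exists p, walk b p z && all A p.

Definition pot z : R :=
  match pselect (reach z) with
  | left h => \sum_(e <- xchoose h) om e
  | right _ => 0
  end.

Lemma pot_indep p1 z1 p2 z2 : walk b p1 z1 -> all A p1 -> walk b p2 z2 -> all A p2 ->
  so z1 z2 -> \sum_(e <- p1) om e = \sum_(e <- p2) om e.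
Proof.
move=> w1 a1 w2 a2 hz.
have w : walk b (p1 ++ rev (map lrev p2)) b.
  by apply: walk_cat (walk_org_r w1 hz) (walk_rev w2).
have a : all A (p1 ++ rev (map lrev p2)).
  rewrite all_cat a1 all_rev all_map /=; apply/allP => e he /=.
  by rewrite hA; move/allP: a2; apply.
have := hloop w a; rewrite big_cat big_rev big_map /=.
under [X in _ + X]eq_bigr => e _ do rewrite hom.
by rewrite sumrN => /eqP; rewrite subr_eq0 => /eqP.
Qed.

Lemma pot_walk p z : walk b p z -> all A p -> pot z = \sum_(e <- p) om e.
Proof.
move=> w a; rewrite /pot; case: pselect => [h|h]; last by case: h; exists p; rewrite w.
have /andP[w' a'] := xchooseP h.
exact: pot_indep w' a' w a (so_refl z).
Qed.

Lemma reach_so z z' : reach z -> so z z' -> reach z'.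
Proof. by move=> [p /andP[w a]] h; exists p; rewrite (walk_org_r w h). Qed.

Lemma reach_step z w : reach z -> so z w -> A w -> reach (lrev w).
Proof.
move=> [p /andP[wk a]] h aw; exists (rcons p w).
by rewrite (walk_rcons wk h) all_rcons aw.
Qed.

Lemma pot_so z z' : reach z -> so z z' -> pot z' = pot z.
Proof.
move=> [p /andP[w a]] h.
by rewrite (pot_walk w a) (pot_walk (walk_org_r w h) a).
Qed.

Lemma pot_step z w : reach z -> so z w -> A w -> pot (lrev w) = pot z + om w.
Proof.
move=> [p /andP[wk a]] h aw.
rewrite (pot_walk wk a) (pot_walk (walk_rcons wk h)); last by rewrite all_rcons aw.
by rewrite -cats1 big_cat big_seq1.
Qed.

End Potential.

End Comb.


Section Lap.
Variables (D : finType) (s : D -> D) (phi : {perm D}).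
Hypothesis Hss : forall d, s (s d) = d.

Local Notation X := (D + D)%type.
Local Notation so := (same_org s phi).
Local Notation lrev := (lrev s).
Local Notation lstar := (lstar s).

Lemma lap_solve (R : realFieldType) (rho : X -> R) :
  (forall y, 0 < rho y) -> (forall y, rho (lrev y) = rho y) ->
  forall c : X -> R, (forall y, c (lrev y) = - c y) ->
  exists U : X -> R, cconst s phi U /\
    forall v, \sum_(y | so v y) rho y * (U (lrev y) - U y) = \sum_(y | so v y) c y.
Proof.
move=> rp rr c ac.
pose ev : 'I_#|{: X}| -> X := enum_val.
have sumE (F : X -> R) : \sum_(j < #|{: X}|) F (ev j) = \sum_y F y.
  by rewrite -(big_enum_val F); apply: eq_bigl => y; rewrite inE.
pose G : 'M[R]_#|{: X}| := \matrix_(i, j) ((so (ev i) (lrev (ev j)))%:R - (so (ev i) (ev j))%:R).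
have key (F : X -> R) : (forall y, F (lrev y) = - F y) -> forall i,
    \sum_j F (ev j) * G i j = - 2%:R * \sum_(y | so (ev i) y) F y.
  move=> aF i; under eq_bigr do rewrite mxE.
  rewrite (sumE (fun y => F y * ((so (ev i) (lrev y))%:R - (so (ev i) y)%:R))).
  under eq_bigr do rewrite mulrBr.
  rewrite sumrB (reindex_inj (lrev_inj Hss)) /=.
  under eq_bigr do rewrite lrevK // aF mulNr.
  rewrite sumrN.
  have -> : \sum_y F y * (so (ev i) y)%:R = \sum_(y | so (ev i) y) F y.
    rewrite [RHS]big_mkcond; apply: eq_bigr => y _.
    by case: ifP; rewrite ?mulr1 ?mulr0.
  by rewrite mulNr mulr_natl mulr2n opprD.
pose Dm : 'M[R]_#|{: X}| := diag_mx (\row_j rho (ev j)).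
pose L := G *m Dm *m G^T.
have pos (w : 'rV[R]_#|{: X}|) : w *m L = 0 -> w *m G = 0.
  move=> hw; set z := w *m G.
  have h0 : z *m Dm *m z^T = 0.
    by rewrite /L !mulmxA in hw; rewrite /z trmx_mul !mulmxA hw mul0mx.
  have hs : \sum_j z 0 j * rho (ev j) * z 0 j = 0.
    have h00 : (z *m Dm *m z^T) 0 0 = 0 by rewrite h0 mxE.
    rewrite -[RHS]h00 mxE; apply: eq_bigr => j _.
    by rewrite mul_mx_diag !mxE.
  apply/rowP => j; rewrite [RHS]mxE.
  have nn : forall j, true -> 0 <= z 0 j * rho (ev j) * z 0 j.
    by move=> k _; rewrite mulrAC -expr2 mulr_ge0 ?sqr_ge0 // ltW.
  have H := psumr_eq0P nn hs. have := H j isT.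
  by rewrite mulrAC -expr2 => /eqP; rewrite mulf_eq0 sqrf_eq0 (gt_eqF (rp _)) orbF => /eqP.
have sLG : (L <= G^T)%MS by rewrite submxMl.
have k1 : (kermx L <= kermx G)%MS.
  rewrite sub_kermx; apply/eqP/row_matrixP => i; rewrite row_mul row0.
  apply: pos; rewrite -row_mul mulmx_ker row0 //.
have k2 : (kermx G <= kermx L)%MS.
  by rewrite sub_kermx /L !mulmxA mulmx_ker !mul0mx.
have rkL : \rank L = \rank G^T.
  have e1 : \rank (kermx L) = \rank (kermx G).
    by apply/eqP; rewrite eqn_leq !mxrankS.
  rewrite !mxrank_ker in e1; rewrite mxrank_tr.
  have h1 := rank_leq_row L; have h2 := rank_leq_row G.
  by rewrite -(subKn h1) e1 subKn.
have hsub : (G^T <= L)%MS.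
  by have [_ <-] := mxrank_leqif_sup sLG; rewrite rkL.
pose cv : 'rV[R]_#|{: X}| := \row_j c (ev j).
have [u hu] : exists u, cv *m G^T = u *m L.
  by apply/submxP; apply: submx_trans (submxMl cv G^T) hsub.
pose U (z : X) : R := \sum_i u 0 i * (so (ev i) z)%:R.
have cU : cconst s phi U.
  move=> a b hab; apply: eq_bigr => i _.
  have -> : so (ev i) b = so (ev i) a => //.
  apply/idP/idP => h; first by apply: so_trans h _; rewrite so_sym.
  exact: so_trans h hab.
have uG j : (u *m G) 0 j = U (lrev (ev j)) - U (ev j).
  rewrite mxE /U -sumrB; apply: eq_bigr => i _; rewrite mxE mulrBr //.
exists U; split => // v.
have := congr1 (fun M : 'rV[R]_#|{: X}| => M 0 (enum_rank v)) hu.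
rewrite /L !mulmxA mxE [RHS]mxE.
have -> : \sum_j cv 0 j * G^T j (enum_rank v) = \sum_j c (ev j) * G (enum_rank v) j.
  by apply: eq_bigr => j _; rewrite !mxE.
rewrite key //.
have -> : \sum_j (u *m G *m Dm) 0 j * G^T j (enum_rank v) =
   \sum_j (rho (ev j) * (U (lrev (ev j)) - U (ev j))) * G (enum_rank v) j.
  by apply: eq_bigr => j _; rewrite mul_mx_diag mxE uG !mxE [_ * rho _]mulrC.
rewrite (key (fun y => rho y * (U (lrev y) - U y))); last first.
  by move=> y; rewrite rr lrevK // -mulrN opprB.
rewrite /ev enum_rankK => h; symmetry; apply: (mulfI _ h).
by rewrite oppr_eq0 pnatr_eq0.
Qed.
End Lap.


Section Uniq.
Variables (D : finType) (s : D -> D) (phi : {perm D}).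
Hypothesis Hss : forall d, s (s d) = d.
Hypothesis Hconn : forall d d', connect (fun a b => (b == phi a) || (b == s a)) d d'.

Local Notation X := (ldart D).
Local Notation so := (same_org s phi).
Local Notation lrev := (lrev s).
Local Notation lstar := (lstar s).
Local Notation walk := (walk s phi).

Variables (R : realFieldType) (rho : X -> R).
Hypothesis rp : forall y, 0 < rho y.
Hypothesis rr : forall y, rho (lrev y) = rho y.

Lemma sum_ge0_zero (F : X -> R) : (forall y, 0 <= F y) -> \sum_y F y = 0 -> forall y, F y = 0.
Proof. by move=> h0 hs y; apply: (psumr_eq0P (P := predT)) => // z _; apply: h0. Qed.

Lemma unique_grad (b : X) (p : X -> R) :
  (forall y, p (lrev y) = - p y) ->
  (forall g z, walk z g z -> all (fun e => isl e == isl b) g -> \sum_(e <- g) p e = 0) ->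
  (forall v, isl v = isl b -> \sum_(y | so v y) rho y * p y = 0) ->
  forall y, isl y = isl b -> p y = 0.
Proof.
move=> ap hl hc.
pose A := fun e : X => isl e == isl b.
have hA z : A (lrev z) = A z by rewrite /A isl_rev.
have rall : forall z, isl z = isl b -> reach s phi A b z.
  apply: (conn_pred Hss Hconn (S := reach s phi A b)).
  - by move=> z z' h r; apply: reach_so r h.
  - move=> z hz r; apply: reach_step r (so_refl s phi z) _; by rewrite /A hz.
  - by exists [::]; rewrite /= so_refl.
pose G := pot s phi A b p.
have dG w : isl w = isl b -> p w = G (lrev w) - G w.
  move=> hw; rewrite /G (pot_step Hss hA ap hl (rall _ hw) (so_refl s phi w)); last by rewrite /A hw.
  by rewrite addrC addKr.
pose F y := if isl y == isl b then rho y * p y else 0.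
pose Gt y := if isl y == isl b then G y else 0.
have cGt : cconst s phi Gt.
  move=> a c hac; rewrite /Gt (so_isl hac); case: ifP => // /eqP h.
  by rewrite /G (pot_so Hss hA ap hl (rall _ _) hac) // (so_isl hac).
have aF y : F (lrev y) = - F y.
  by rewrite /F isl_rev rr ap; case: ifP; rewrite ?mulrN ?oppr0.
have cF v : \sum_(y | so v y) F y = 0.
  case: (boolP (isl v == isl b)) => hv.
    rewrite -[RHS](hc v (eqP hv)); apply: eq_bigr => y hy.
    by rewrite /F -(so_isl hy) hv.
  by apply: big1 => y hy; rewrite /F -(so_isl hy) (negbTE hv).
have E := energy Hss aF cGt cF.
have nn y : 0 <= F y * (Gt (lrev y) - Gt y).
  rewrite /F /Gt isl_rev; case: ifP => [/eqP h|]; last by rewrite mul0r.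
  rewrite -(dG _ h) -mulrA; apply: mulr_ge0; [exact: ltW | by rewrite -expr2 sqr_ge0].
move=> y hy; have := sum_ge0_zero nn E y.
rewrite /F /Gt isl_rev hy eqxx -(dG _ hy) -mulrA => /eqP.
by rewrite mulf_eq0 (gt_eqF (rp _)) /= -expr2 sqrf_eq0 => /eqP.
Qed.


Lemma dual_rev e l : dual_edge s (lrev e) l = dual_edge s e l.
Proof.
rewrite /dual_edge; apply/orP/orP => [[]/eqP h|[]/eqP h].
- by right; rewrite -h lrevK.
- by left; rewrite (lrev_inj Hss h).
- by right; rewrite h.
- by left; rewrite h lrevK.
Qed.

Lemma dual_star y l : dual_edge s (lstar y) l = (y == l) || (lrev y == l).
Proof.
rewrite /dual_edge -lstar_rev //; congr (_ || _).
- by apply/eqP/eqP => [/(lstar_inj Hss)|->].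
- apply/eqP/eqP => [/(lstar_inj Hss) ->|<-]; first by rewrite lrevK.
  by rewrite lrevK.
Qed.

Lemma unique_cograd x lam x' (q : X -> R) :
  simple_path s phi x lam x' ->
  (forall y, q (lrev y) = - q y) ->
  (forall g z, walk z g z ->
     all (fun e => (isl e != isl x) && all (fun l => ~~ dual_edge s e l) lam) g ->
     \sum_(e <- g) rho (lstarI s e) * q (lstarI s e) = 0) ->
  (forall v, isl v = isl x -> \sum_(y | so v y) rho y * q y = 0) ->
  (forall f, isl f != isl x -> \sum_(z | so f z) q (lstar z) = 0) ->
  forall y, isl y = isl x -> q y = 0.
Proof.
move=> hsp aq hb hc hd.
have lamK : all (fun e => isl e == isl x) lam.
  by have [_] := walk_type (proj1 (andP hsp)).
pose A := fun e : X => (isl e != isl x) && all (fun l => ~~ dual_edge s e l) lam.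
have hA z : A (lrev z) = A z.
  rewrite /A isl_rev; congr (_ && _); apply: eq_all => l; by rewrite dual_rev.
pose om z := rho (lstarI s z) * q (lstarI s z).
have aom z : om (lrev z) = - om z.
  by rewrite /om /lstarI lrevK // lstar_rev // rr aq mulrN opprK.
pose b' := lstar x.
have hb' : isl b' = ~~ isl x by rewrite isl_star.
have Astar y : isl y = isl x -> y \notin lam -> lrev y \notin lam -> A (lstar y).
  move=> hy h1 h2; rewrite /A isl_star hy; apply/andP; split; first by case: (isl x).
  apply/allP => l hl; rewrite dual_star; apply/negP => /orP[]/eqP e.
  - by move: h1; rewrite e hl.
  - by move: h2; rewrite e hl.
pose chi z : R := (`[< reach s phi A b' z >])%:R.
have cchi : cconst s phi chi.
  move=> a c hac; rewrite /chi (asbool_equiv_eq (Q := reach s phi A b' c)) //; split => r.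
  - exact: reach_so r hac.
  - by apply: reach_so r _; rewrite so_sym.
pose h y := if isl y == isl x then chi (lrev (lstar y)) - chi (lstar y) else 0.
have h0 : forall y, h y = 0.
  apply: (path_flow_zero Hss hsp).
  - move=> y; rewrite /h isl_rev; case: ifP; rewrite ?oppr0 // => _.
    by rewrite lstar_rev // lrevK // opprB.
  - move=> y h1 h2; rewrite /h; case: ifP => // /eqP hy.
    have aw := Astar _ hy h1 h2.
    rewrite /chi (asbool_equiv_eq (Q := reach s phi A b' (lstar y))) ?subrr //; split => r.
    + have := reach_step (w := lrev (lstar y)) r _ _.
      by rewrite lrevK // so_refl hA => /(_ isT aw).
    + exact: reach_step r (so_refl s phi _) aw.
  - move=> v; case: (boolP (isl v == isl x)) => hv.
      rewrite -[RHS](telescope_vertex Hss v cchi); apply: eq_bigr => y hy.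
      by rewrite /h -(so_isl hy) hv.
    by apply: big1 => y hy; rewrite /h -(so_isl hy) (negbTE hv).
have rall : forall z, isl z = isl b' -> reach s phi A b' z.
  apply: (conn_pred Hss Hconn (S := reach s phi A b')).
  - by move=> z z' hz r; apply: reach_so r hz.
  - move=> z hz r; have := h0 (lstarI s z).
    rewrite /h isl_starI hz hb' negbK eqxx lstarK //.
    rewrite /chi; case: asboolP => // nr; case: asboolP => // _.
    by move/eqP; rewrite sub0r oppr_eq0 oner_eq0.
  - by exists [::]; rewrite /= so_refl.
pose G := pot s phi A b' om.
pose Gt z := if isl z == isl b' then G z else 0.
have cGt : cconst s phi Gt.
  move=> a c hac; rewrite /Gt (so_isl hac); case: ifP => // /eqP hc'.
  by rewrite /G (pot_so Hss hA aom hb (rall _ _) hac) // (so_isl hac).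
have dG w : A w -> om w = G (lrev w) - G w.
  move=> aw; have hw : isl w = isl b' by rewrite hb'; move: aw => /andP[]; case: (isl w); case: (isl x).
  rewrite /G (pot_step Hss hA aom hb (rall _ hw) (so_refl s phi w)) //.
  by rewrite addrC addKr.
have hsK y : isl y = isl x -> isl (lstar y) = isl b'.
  by move=> hy; rewrite isl_star hy hb'.
pose h2 y := if isl y == isl x then rho y * q y - (Gt (lrev (lstar y)) - Gt (lstar y)) else 0.
have h20 : forall y, h2 y = 0.
  apply: (path_flow_zero Hss hsp).
  - move=> y; rewrite /h2 isl_rev; case: ifP; rewrite ?oppr0 // => _.
    by rewrite lstar_rev // lrevK // rr aq mulrN opprB opprD opprK addrC.
  - move=> y h1 h2'; rewrite /h2; case: ifP => // /eqP hy.
    have aw := Astar _ hy h1 h2'.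
    rewrite /Gt isl_rev !hsK // eqxx -dG // /om lstarIK //.
    by rewrite subrr.
  - move=> v; case: (boolP (isl v == isl x)) => hv.
      transitivity (\sum_(y | so v y) rho y * q y -
        \sum_(y | so v y) (Gt (lrev (lstar y)) - Gt (lstar y))).
        by rewrite -sumrB; apply: eq_bigr => y hy; rewrite /h2 -(so_isl hy) hv.
      by rewrite (hc v (eqP hv)) (telescope_vertex Hss v cGt) subrr.
    by apply: big1 => y hy; rewrite /h2 -(so_isl hy) (negbTE hv).
have key y : isl y = isl x -> rho y * q y = Gt (lrev (lstar y)) - Gt (lstar y).
  move=> hy; have := h20 y; rewrite /h2 hy eqxx => /eqP; rewrite subr_eq0 => /eqP //.
pose F z := if isl z == isl b' then q (lstarI s z) else 0.
have aF z : F (lrev z) = - F z.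
  rewrite /F isl_rev; case: ifP; rewrite ?oppr0 // => _.
  by rewrite /lstarI lrevK // lstar_rev // aq opprK.
have cF f : \sum_(z | so f z) F z = 0.
  case: (boolP (isl f == isl b')) => hf.
    transitivity (- \sum_(z | so f z) q (lstar z)).
      rewrite -sumrN; apply: eq_bigr => z hz; rewrite /F -(so_isl hz) hf.
      by rewrite /lstarI lstar_rev // aq.
    by rewrite hd ?oppr0 // (eqP hf) hb'; case: (isl x).
  by apply: big1 => z hz; rewrite /F -(so_isl hz) (negbTE hf).
have E := energy Hss aF cGt cF.
rewrite (reindex_inj (lstar_inj Hss)) /= in E.
have nn y : 0 <= F (lstar y) * (Gt (lrev (lstar y)) - Gt (lstar y)).
  rewrite /F isl_star hb'; case: (boolP (isl y == isl x)) => [/eqP hy|hy].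
    rewrite ifT; last by rewrite hy.
    rewrite -key // lstarIK // mulrCA; apply: mulr_ge0; first exact: ltW.
    by rewrite -expr2 sqr_ge0.
  by rewrite ifF ?mul0r //; apply/negbTE; move: hy; case: (isl y); case: (isl x).
move=> y hy; have := sum_ge0_zero nn E y.
rewrite /F isl_star hb' ifT; last by rewrite hy.
rewrite -key // lstarIK // mulrCA => /eqP; rewrite mulf_eq0 (gt_eqF (rp _)) /=.
by rewrite -expr2 sqrf_eq0 => /eqP.
Qed.

End Uniq.


Section Cplx.
Variable R : realType.
Local Notation C := (complex R).

Lemma ReD (a b : C) : complex.Re (a + b) = complex.Re a + complex.Re b. Proof. by case: a => ? ?; case: b => ? ? /=. Qed.
Lemma ImD (a b : C) : complex.Im (a + b) = complex.Im a + complex.Im b. Proof. by case: a => ? ?; case: b => ? ? /=. Qed.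
Lemma ReN (a : C) : complex.Re (- a) = - complex.Re a. Proof. by case: a => ? ? /=. Qed.
Lemma ImN (a : C) : complex.Im (- a) = - complex.Im a. Proof. by case: a => ? ? /=. Qed.
Lemma Re0 : complex.Re (0 : C) = 0. Proof. by []. Qed.
Lemma Im0 : complex.Im (0 : C) = 0. Proof. by []. Qed.
Lemma Re_sum (I : Type) (r : seq I) (P : pred I) (F : I -> C) :
  complex.Re (\sum_(i <- r | P i) F i) = \sum_(i <- r | P i) complex.Re (F i).
Proof. exact: (big_morph _ ReD Re0). Qed.
Lemma Im_sum (I : Type) (r : seq I) (P : pred I) (F : I -> C) :
  complex.Im (\sum_(i <- r | P i) F i) = \sum_(i <- r | P i) complex.Im (F i).
Proof. exact: (big_morph _ ImD Im0). Qed.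
Lemma ReRM (r : R) (z : C) : complex.Re (realC r * z) = r * complex.Re z.
Proof. by case: z => a b /=; rewrite mul0r subr0. Qed.
Lemma ImRM (r : R) (z : C) : complex.Im (realC r * z) = r * complex.Im z.
Proof. by case: z => a b /=; rewrite mul0r addr0. Qed.
Lemma ReiM (z : C) : complex.Re ((iC R) * z) = - complex.Im z.
Proof. by case: z => a b /=; rewrite mul0r mul1r sub0r. Qed.
Lemma ImiM (z : C) : complex.Im ((iC R) * z) = complex.Re z.
Proof. by case: z => a b /=; rewrite mul0r mul1r add0r. Qed.
Lemma ReR (r : R) : complex.Re (realC r) = r. Proof. by []. Qed.
Lemma ImR (r : R) : complex.Im (realC r) = 0. Proof. by []. Qed.
Lemma C_ext (z w : C) : complex.Re z = complex.Re w -> complex.Im z = complex.Im w -> z = w.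
Proof. by case: z; case: w => a b c d /= -> ->. Qed.
Lemma realCB (a b : R) : realC (a - b) = realC a - realC b :> C.
Proof. by apply: C_ext; rewrite /= ?subrr ?oppr0 ?addr0. Qed.
Lemma realCM (a b : R) : realC (a * b) = realC a * realC b :> C.
Proof. by apply: C_ext; rewrite /= ?mulr0 ?mul0r ?subr0 ?addr0. Qed.
Lemma realC_sum (I : Type) (r : seq I) (P : pred I) (F : I -> R) :
  realC (\sum_(i <- r | P i) F i) = \sum_(i <- r | P i) realC (F i) :> C.
Proof.
apply: (big_morph _ _ (erefl (realC 0 : C))) => a b.
by apply: C_ext; rewrite /= ?addr0.
Qed.
Lemma iC2 : (iC R) * (iC R) = -1 :> C.
Proof. by apply: C_ext; rewrite /= ?mulr0 ?mul0r ?mulr1 ?mul1r ?sub0r ?addr0 ?oppr0. Qed.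
End Cplx.


Section Main.
Variables (D : finType) (s : D -> D) (phi : {perm D}).
Hypothesis Hss : forall d, s (s d) = d.
Variables (R : realType) (rho : ldart D -> R).
Hypothesis rp : forall y, 0 < rho y.
Hypothesis rr : forall y, rho (lrev s y) = rho y.
Hypothesis rs : forall y, rho y * rho (lstar s y) = 1.

Local Notation X := (ldart D).
Local Notation C := (complex R).
Local Notation I := (iC R).
Local Notation so := (same_org s phi).
Local Notation lrev := (lrev s).
Local Notation lstar := (lstar s).
Local Notation lstarI := (lstarI s).
Local Notation walk := (walk s phi).

Lemma rsI y : rho (lstarI y) * rho y = 1.
Proof. by rewrite -{2}(lstarK Hss y) rs. Qed.

Lemma I_neq0 : I != 0.
Proof. by apply/eqP => /(congr1 (@complex.Im R)) /= /eqP; rewrite oner_eq0. Qed.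

Lemma realC_eq0 (r : R) : (realC r == 0 :> C) = (r == 0).
Proof. by apply/eqP/eqP => [/(congr1 (@complex.Re R)) //|->]. Qed.

Lemma realC1 : realC 1 = 1 :> C. Proof. by []. Qed.

Lemma type10_star a : type10 s rho a -> forall w, a (lstar w) = I * realC (rho w) * a w.
Proof.
move=> [_ h] w; have := h w; rewrite /hodge !mulNr => /eqP; rewrite eqr_opp => /eqP e.
have := congr1 (fun z => realC (rho w) * z) e.
by rewrite mulrA -realCM rs realC1 mul1r => ->; rewrite mulrCA mulrA.
Qed.

Variable (x : X).
Definition mk (t : X -> C) y :=
  if isl y == isl x then t y else I * realC (rho (lstarI y)) * t (lstarI y).

Lemma lstarI_rev y : lstarI (lrev y) = lrev (lstarI y).
Proof. by rewrite /lstarI lrevK // lstar_rev // lrevK. Qed.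

Lemma mk_type10 t : (forall y, t (lrev y) = - t y) -> type10 s rho (mk t).
Proof.
move=> at_; split.
  move=> y; rewrite /mk isl_rev; case: ifP => _; first exact: at_.
  by rewrite lstarI_rev rr at_ mulrN.
move=> y; rewrite /hodge /mk isl_star.
case: (boolP (isl y == isl x)) => [/eqP hy|hy].
  have hab : realC (rho (lstar y)) * realC (rho y) = 1 :> C by rewrite -realCM mulrC rs.
  rewrite hy; case: (isl x) => /=; rewrite lstarIK //;
  (transitivity (- (realC (rho (lstar y)) * realC (rho y)) * (I * t y)); first ring);
  by rewrite hab mulN1r mulNr.
have -> : (~~ isl y == isl x) = true by move: hy; case: (isl y); case: (isl x).
rewrite -{1 2}(lstarK Hss y) lstar2 // at_ rr.
transitivity (- (I * I) * realC (rho (lstarI y)) * t (lstarI y)); last ring.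
by rewrite iC2 opprK mul1r mulrN mulNr opprK.
Qed.


Lemma contour_mkK t v : isl v = isl x ->
  contour s phi (mk t) v = I * \sum_(y | so v y) realC (rho y) * t y.
Proof.
move=> hv; rewrite /contour mulr_sumr; apply: eq_bigr => y hy.
rewrite /mk isl_star -(so_isl hy) hv.
have -> : (~~ isl x == isl x) = false by case: (isl x).
by rewrite lstarIK // mulrA.
Qed.

Lemma contour_mkK' t f : isl f != isl x ->
  contour s phi (mk t) f = \sum_(z | so f z) t (lstar z).
Proof.
move=> hf; rewrite /contour; apply: eq_bigr => z hz.
rewrite /mk isl_star -(so_isl hz).
have -> : (~~ isl f == isl x) = true by move: hf; case: (isl f); case: (isl x).
by [].
Qed.

Lemma loop_isl g z : walk z g z -> forall e, e \in g -> isl e = isl z.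
Proof. by move/walk_type => [_ /allP h] e /h /eqP. Qed.

Lemma hol_mkK t g z : walk z g z -> isl z = isl x -> holonomy (mk t) g = \sum_(e <- g) t e.
Proof.
move=> w hz; rewrite /holonomy big_seq_cond [RHS]big_seq_cond; apply: eq_bigr => e /andP[he _].
by rewrite /mk (loop_isl w he) hz eqxx.
Qed.

Lemma hol_mkK' t g z : walk z g z -> isl z != isl x ->
  holonomy (mk t) g = \sum_(e <- g) I * realC (rho (lstarI e)) * t (lstarI e).
Proof.
move=> w hz; rewrite /holonomy big_seq_cond [RHS]big_seq_cond; apply: eq_bigr => e /andP[he _].
by rewrite /mk (loop_isl w he) (negbTE hz).
Qed.


Variables (x' : X) (lam : seq X).
Hypothesis hsp : simple_path s phi x lam x'.
Hypothesis Hxx' : ~~ so x x'.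

Lemma islx' : isl x' = isl x.
Proof. by have [] := walk_type (proj1 (andP hsp)). Qed.

Let soS := so_sym phi Hss.

Lemma realCN (r : R) : realC (- r) = - realC r :> C.
Proof. by apply: C_ext; rewrite /= ?oppr0. Qed.

Definition cc : C := realC 2 * I * realC pi.

Lemma ccE : cc = I * realC (2 * pi).
Proof. by rewrite /cc realCM mulrCA mulrA. Qed.

Lemma pi_neq0 : (2 * pi : R) != 0.
Proof. by rewrite mulf_neq0 ?pnatr_eq0 // gt_eqF // pi_gt0. Qed.

Lemma cc_neq0 : cc != 0.
Proof. by rewrite ccE mulf_neq0 ?I_neq0 // realC_eq0 pi_neq0. Qed.

Lemma mero_of a : type10 s rho a ->
  (forall v, isl v = isl x -> contour s phi a v = I * realC (2 * pi * ((so v x)%:R - (so v x')%:R))) ->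
  (forall f, isl f != isl x -> contour s phi a f = 0) ->
  [/\ meromorphic s phi rho (fun y => so x y || so x' y) a,
      residue s phi a x = 1 & residue s phi a x' = -1].
Proof.
move=> ta hK hK'.
have sx'x : so x' x = false by rewrite soS (negbTE Hxx').
split.
- split => //; split.
  + move=> y; rewrite negb_or => /andP[h1 h2]; rewrite /closed_at.
    case: (boolP (isl y == isl x)) => [/eqP hy|hy]; last exact: hK'.
    by rewrite hK // soS (negbTE h1) soS (negbTE h2) subrr mulr0 mulr0.
  + move=> y hP; rewrite /closed_at.
    have hy : isl y = isl x.
      by case/orP: hP => /so_isl <- //; rewrite islx'.
    rewrite hK // => /eqP; apply/negP; rewrite mulf_eq0 negb_or I_neq0 realC_eq0 /=.
    rewrite mulf_eq0 negb_or pi_neq0 /= subr_eq0 !(soS y).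
    case/orP: hP => h; rewrite h.
      case: (boolP (so x' y)) => h3; last by rewrite oner_eq0.
      by move: Hxx'; rewrite (so_trans h _) // soS.
    case: (boolP (so x y)) => h3; last by rewrite eq_sym oner_eq0.
    by move: Hxx'; rewrite (so_trans h3 _) // soS.
- rewrite /residue hK // so_refl (negbTE Hxx') subr0 mulr1 -ccE mulVf //.
  exact: cc_neq0.
- rewrite /residue hK ?islx' // so_refl sx'x sub0r mulrN1 realCN mulrN -ccE mulrN mulVf //.
  exact: cc_neq0.
Qed.


Definition c0 (y : X) : R := 2 * pi * \sum_(e <- lam) ((e == y)%:R - (e == lrev y)%:R).

Lemma c0N y : c0 (lrev y) = - c0 y.
Proof.
rewrite /c0 -mulrN -sumrN; congr (_ * _); apply: eq_bigr => e _.
by rewrite lrevK // opprB.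
Qed.

Lemma sum_pred1 (P : pred X) e : \sum_(y | P y) ((e == y)%:R : R) = (P e)%:R.
Proof.
case: (boolP (P e)) => he.
  rewrite (bigD1 e) //= eqxx big1 ?addr0 // => y /andP[_ hy].
  by rewrite eq_sym (negbTE hy).
by apply: big1 => y hy; case: eqP => // ey; rewrite ey hy in he.
Qed.

Lemma c0_flow v : \sum_(y | so v y) c0 y = 2 * pi * ((so v x)%:R - (so v x')%:R).
Proof.
rewrite /c0 -mulr_sumr; congr (_ * _).
rewrite exchange_big /=.
transitivity (\sum_(e <- lam) ((so v e)%:R - (so v (lrev e))%:R : R)).
  apply: eq_bigr => e _; rewrite sumrB sum_pred1; congr (_ - _).
  rewrite -sum_pred1; apply: eq_bigr => y _.
  suff -> : (e == lrev y) = (lrev e == y) by [].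
  by apply/eqP/eqP => [->|<-]; rewrite lrevK.
have cG : cconst s phi (fun z => - ((so v z)%:R : R)).
  move=> a b hab; suff -> : so v a = so v b by [].
  by apply/idP/idP => h; [exact: so_trans h hab | apply: so_trans h _; rewrite soS].
have := telescope_walk cG (proj1 (andP hsp)).
under eq_bigr do rewrite opprK addrC.
by move=> ->; rewrite addrC opprK.
Qed.

Lemma realC0 : realC 0 = 0 :> C. Proof. by []. Qed.

Lemma exists_alpha : exists a, [/\ meromorphic s phi rho (fun y => so x y || so x' y) a,
        residue s phi a x = 1, residue s phi a x' = -1 &
        (forall g, loop s phi g -> avoids_dual s lam g ->
           complex.Re (holonomy a g) = 0)].
Proof.
have [U [cU hU]] := lap_solve phi Hss rp rr c0N.
pose t y : C := realC (U (lrev y) - U y).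
have at_ y : t (lrev y) = - t y by rewrite /t lrevK // -realCN opprB.
exists (mk t).
have hK : forall v, isl v = isl x -> contour s phi (mk t) v = I * realC (2 * pi * ((so v x)%:R - (so v x')%:R)).
  move=> v hv; rewrite contour_mkK // -c0_flow -hU realC_sum; congr (_ * _).
  by apply: eq_bigr => y _; rewrite realCM.
have hK' : forall f, isl f != isl x -> contour s phi (mk t) f = 0.
  move=> f hf; rewrite contour_mkK' // /t -realC_sum.
  by rewrite (telescope_vertex Hss f cU).
have [m r1 r2] := mero_of (mk_type10 at_) hK hK'.
split => // g [z w] _.
case: (boolP (isl z == isl x)) => [/eqP hz|hz].
  by rewrite (hol_mkK _ w hz) /t -realC_sum (telescope_walk cU w) subrr.
rewrite (hol_mkK' _ w hz) Re_sum big1 // => e _.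
by rewrite -mulrA ReiM -realCM ImR oppr0.
Qed.

Lemma rho_inv z : (rho (lstar z))^-1 = rho z.
Proof.
have := rs z; move/(congr1 (fun r => r / rho (lstar z))).
by rewrite mulfK ?gt_eqF // div1r => ->.
Qed.

Lemma c0_avoid e : all (fun l => ~~ dual_edge s e l) lam -> c0 (lstarI e) = 0.
Proof.
move=> ha; rewrite /c0 big_seq big1 ?mulr0 // => l hl.
have := allP ha l hl; rewrite -{1}(lstarK Hss e) (dual_star Hss) negb_or.
by case/andP => /negbTE h1 /negbTE h2; rewrite eq_sym h1 eq_sym h2 subrr.
Qed.

Lemma exists_beta : exists a, [/\ meromorphic s phi rho (fun y => so x y || so x' y) a,
        residue s phi a x = 1, residue s phi a x' = -1 &
        (forall g, loop s phi g -> avoids_dual s lam g ->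
           complex.Im (holonomy a g) = 0)].
Proof.
pose c1 z := rho z * c0 (lstar z).
have c1N z : c1 (lrev z) = - c1 z by rewrite /c1 lstar_rev c0N rr mulrN.
have [Gv [cG hG]] := lap_solve phi Hss rp rr c1N.
pose dG z := Gv (lrev z) - Gv z.
pose t y : C := realC ((c0 y + dG (lstar y)) / rho y).
have at_ y : t (lrev y) = - t y.
  rewrite /t /dG lstar_rev c0N lrevK // rr -realCN; congr realC; rewrite /dG.
  by ring.
exists (mk t).
have hK : forall v, isl v = isl x -> contour s phi (mk t) v = I * realC (2 * pi * ((so v x)%:R - (so v x')%:R)).
  move=> v hv; rewrite contour_mkK // -c0_flow.
  have -> : \sum_(y | so v y) c0 y = \sum_(y | so v y) (c0 y + dG (lstar y)).
    by rewrite big_split /= (telescope_vertex Hss v cG) addr0.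
  rewrite realC_sum.
  congr (_ * _); apply: eq_bigr => y _.
  by rewrite -realCM /t mulrC divfK ?gt_eqF.
have hK' : forall f, isl f != isl x -> contour s phi (mk t) f = 0.
  move=> f hf; rewrite contour_mkK' //.
  transitivity (realC (\sum_(z | so f z) (c1 z - rho z * (Gv (lrev z) - Gv z))) : C);
    last by rewrite sumrB hG subrr.
  rewrite realC_sum; apply: eq_bigr => z _.
  rewrite /t lstar2 /dG lrevK // rho_inv.
  congr realC; rewrite /c1; ring.
have [m r1 r2] := mero_of (mk_type10 at_) hK hK'.
split => // g [z w] av.
case: (boolP (isl z == isl x)) => [/eqP hz|hz].
  by rewrite (hol_mkK _ w hz) Im_sum big1.
rewrite (hol_mkK' _ w hz) Im_sum.
transitivity (\sum_(e <- g) dG e); last by rewrite (telescope_walk cG w) subrr.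
rewrite big_seq_cond [RHS]big_seq_cond; apply: eq_bigr => e /andP[he _].
rewrite -mulrA ImiM -realCM ReR /t lstarK // c0_avoid; last by move/allP: av; apply.
by rewrite add0r mulrC divfK ?gt_eqF.
Qed.


Hypothesis Hconn : forall d d', connect (fun a b => (b == phi a) || (b == s a)) d d'.

Lemma lam_isl : all (fun e => isl e == isl x) lam.
Proof. by have [_] := walk_type (proj1 (andP hsp)). Qed.

Lemma uniq_form (g : X -> C) : type10 s rho g -> (forall v, contour s phi g v = 0) ->
  (forall l, loop s phi l -> avoids_dual s lam l -> complex.Re (holonomy g l) = 0) ->
  forall y, g y = 0.
Proof.
move=> tg cg hg.
have gs := type10_star tg.
have ag : forall y, g (lrev y) = - g y by case: tg.
pose p y := complex.Re (g y); pose q y := complex.Im (g y).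
have ap y : p (lrev y) = - p y by rewrite /p ag ReN.
have aq y : q (lrev y) = - q y by rewrite /q ag ImN.
have cE v : contour s phi g v = \sum_(y | so v y) I * (realC (rho y) * g y).
  by apply: eq_bigr => y _; rewrite gs mulrA.
have hcp v : isl v = isl x -> \sum_(y | so v y) rho y * p y = 0.
  move=> _; have := congr1 (@complex.Im R) (cg v); rewrite cE Im_sum /= => h; rewrite -[RHS]h.
  by apply: eq_bigr => y _; rewrite ImiM ReRM.
have hcq v : isl v = isl x -> \sum_(y | so v y) rho y * q y = 0.
  move=> _; have := congr1 (@complex.Re R) (cg v); rewrite cE Re_sum /=.
  rewrite (eq_bigr (fun y => - (rho y * q y))); last by move=> y _; rewrite ReiM ImRM.
  by rewrite sumrN => /eqP; rewrite oppr_eq0 => /eqP.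
have hl : forall l z, walk z l z -> all (fun e => isl e == isl x) l -> \sum_(e <- l) p e = 0.
  move=> l z w al; rewrite -Re_sum; apply: hg; first by exists z.
  apply/allP => e he; apply/allP => l' hl'; rewrite /dual_edge.
  have h1 := allP al e he; have h2 := allP lam_isl l' hl'.
  apply/negP => /orP[]/eqP ee; move: h1 h2; rewrite ee ?isl_rev isl_star;
    by case: (isl l'); case: (isl x).
have hp : forall y, isl y = isl x -> p y = 0.
  by move=> y; apply: (unique_grad Hss Hconn rp rr ap hl hcp).
have hb : forall l z, walk z l z ->
   all (fun e => (isl e != isl x) && all (fun l' => ~~ dual_edge s e l') lam) l ->
   \sum_(e <- l) rho (lstarI e) * q (lstarI e) = 0.
  move=> l z w al.
  have av : avoids_dual s lam l by apply/allP => e he; have /andP[_ ->] := allP al e he.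
  have := hg l (ex_intro _ z w) av; rewrite /holonomy Re_sum.
  rewrite (eq_bigr (fun e => - (rho (lstarI e) * q (lstarI e)))); last first.
    by move=> e _; rewrite -{1}(lstarK Hss e) gs -mulrA ReiM ImRM.
  by rewrite sumrN => /eqP; rewrite oppr_eq0 => /eqP.
have hd : forall f, isl f != isl x -> \sum_(z | so f z) q (lstar z) = 0.
  by move=> f _; have := congr1 (@complex.Im R) (cg f); rewrite /contour Im_sum.
have hq : forall y, isl y = isl x -> q y = 0.
  by move=> y; apply: (unique_cograd Hss Hconn rp rr hsp aq hb hcq hd).
have hK y : isl y = isl x -> g y = 0.
  by move=> hy; apply: C_ext; [exact: hp | exact: hq].
move=> y; case: (boolP (isl y == isl x)) => [/eqP|hy]; first exact: hK.
rewrite -(lstarK Hss y) gs hK ?mulr0 //.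
by rewrite isl_starI; move: hy; case: (isl y); case: (isl x).
Qed.

End Main.


Section Lin.
Variables (D : finType) (s : D -> D) (phi : {perm D}).
Hypothesis Hss : forall d, s (s d) = d.
Variables (R : realType) (rho : ldart D -> R).
Local Notation X := (ldart D).
Local Notation C := (complex R).
Local Notation I := (iC R).

Lemma type10_sub (a b : X -> C) : type10 s rho a -> type10 s rho b ->
  type10 s rho (fun y => a y - b y).
Proof.
move=> [a1 a2] [b1 b2]; split => [y|y]; first by rewrite a1 b1 opprD.
by move: (a2 y) (b2 y); rewrite /hodge => e1 e2; rewrite mulrBr e1 e2 mulrBr.
Qed.

Lemma type10_scale (c : C) (a : X -> C) : type10 s rho a -> type10 s rho (fun y => c * a y).
Proof.
move=> [a1 a2]; split => [y|y]; first by rewrite a1 mulrN.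
move: (a2 y); rewrite /hodge => e.
by rewrite mulrCA e mulrCA.
Qed.

Lemma contour_sub (a b : X -> C) v :
  contour s phi (fun y => a y - b y) v = contour s phi a v - contour s phi b v.
Proof. by rewrite /contour sumrB. Qed.

Lemma contour_scale (c : C) (a : X -> C) v :
  contour s phi (fun y => c * a y) v = c * contour s phi a v.
Proof. by rewrite /contour mulr_sumr. Qed.

Lemma hol_sub (a b : X -> C) g : holonomy (fun y => a y - b y) g = holonomy a g - holonomy b g.
Proof. by rewrite /holonomy sumrB. Qed.

Lemma hol_scale (c : C) (a : X -> C) g : holonomy (fun y => c * a y) g = c * holonomy a g.
Proof. by rewrite /holonomy mulr_sumr. Qed.

Lemma contour_so (a : X -> C) u v : same_org s phi u v -> contour s phi a u = contour s phi a v.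
Proof.
move=> h; rewrite /contour; apply: eq_bigl => y; apply/idP/idP => h2.
- by apply: so_trans h2; rewrite (so_sym phi Hss).
- exact: so_trans h h2.
Qed.

Lemma contour_res (a : X -> C) y : contour s phi a y = cc R * residue s phi a y.
Proof. rewrite /residue mulrA mulfV ?mul1r //; exact: cc_neq0. Qed.

End Lin.

Theorem mainTheorem9 (R : realType) (D : finType) (s : D -> D) (phi : {perm D})
  (rho : ldart D -> R)
  (Hmap : is_cellular_map s phi)
  (Hrho : conformal_structure s rho)
  (x x' : ldart D) (lam : seq (ldart D))
  (Hlam : simple_path s phi x lam x')
  (Hxx' : ~~ same_org s phi x x') :
  let P := fun y => same_org s phi x y || same_org s phi x' y in
  exists! ab : (ldart D -> complex R) * (ldart D -> complex R),
    [/\ meromorphic s phi rho P ab.1,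
        residue s phi ab.1 x = 1, residue s phi ab.1 x' = -1 &
        (forall g, loop s phi g -> avoids_dual s lam g ->
           complex.Re (holonomy ab.1 g) = 0)] /\
    [/\ meromorphic s phi rho P ab.2,
        residue s phi ab.2 x = 1, residue s phi ab.2 x' = -1 &
        (forall g, loop s phi g -> avoids_dual s lam g ->
           complex.Im (holonomy ab.2 g) = 0)].
Proof.
move: Hmap => [Hss [_ Hconn]]; move: Hrho => [rr [rp rs]].
move=> P.
have [a [ma ra1 ra2 ha]] := exists_alpha Hss rp rr rs Hlam Hxx'.
have [b [mb rb1 rb2 hb]] := exists_beta Hss rp rr rs Hlam Hxx'.
exists (a, b); split; first by split; split.
move=> [a' b'] [[ma' ra1' ra2' ha'] [mb' rb1' rb2' hb']] /=.
have ceq : forall (u v : ldart D -> complex R), meromorphic s phi rho P u ->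
    meromorphic s phi rho P v -> residue s phi u x = residue s phi v x ->
    residue s phi u x' = residue s phi v x' ->
    forall w, contour s phi (fun y => u y - v y) w = 0.
  move=> u v [_ [cu _]] [_ [cv _]] e1 e2 w; rewrite contour_sub.
  case: (boolP (P w)) => hw.
    case/orP: hw => h.
      by rewrite -!(contour_so Hss _ h) !contour_res e1 subrr.
    by rewrite -!(contour_so Hss _ h) !contour_res e2 subrr.
  by rewrite cu // cv // subrr.
congr pair; apply: funext => y; apply/eqP; rewrite -subr_eq0; apply/eqP.
- apply: (uniq_form Hss rp rr rs Hlam Hconn (g := fun y => a y - a' y)).
  + exact: type10_sub (proj1 ma) (proj1 ma').
  + by apply: ceq; rewrite ?ra1 ?ra1' ?ra2 ?ra2'.
  + by move=> l hl hav; rewrite hol_sub ReD ReN ha // ha' // subrr.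
- have tg := type10_scale (- iC R) (type10_sub (proj1 mb) (proj1 mb')).
  have cg : forall w, contour s phi (fun y => - iC R * (b y - b' y)) w = 0.
    move=> w; rewrite contour_scale ceq ?mulr0 //.
    by rewrite rb1 rb1'.
    by rewrite rb2 rb2'.
  have hg : forall l, loop s phi l -> avoids_dual s lam l ->
      complex.Re (holonomy (fun y => - iC R * (b y - b' y)) l) = 0.
    move=> l hl hav; rewrite hol_scale mulNr ReN ReiM opprK.
    by rewrite hol_sub ImD ImN hb // hb' // subrr.
  have := uniq_form Hss rp rr rs Hlam Hconn tg cg hg y.
  by move/eqP; rewrite mulf_eq0 oppr_eq0 (negbTE (I_neq0 R)) /= => /eqP.
Qed.
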